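(* Let $\mathfrak A$ be the real algebra of generalized transformations equipped with the involution $\mathcal A\mapsto\mathcal A'$ (a generalized adjoint), and let $\varphi=\Phi|_1$ be the local state of a symmetric faithful state $\Phi$ which is also preparationally faithful. Define $\langle\mathcal A|\mathcal B\rangle_\varphi=\varphi(\mathcal A'\circ\mathcal B)$, $\|\mathcal A\|_\varphi=\sqrt{\langle\mathcal A|\mathcal A\rangle_\varphi}$, and the left ideal $\mathfrak I=\{\mathcal X\in\mathfrak A:\varphi(\mathcal X'\circ\mathcal X)=0\}$. Let $\mathcal A,\mathcal B\in\mathfrak A$ be bounded, i.e. $\|\mathcal A\|,\|\mathcal A'\|,\|\mathcal B\|,\|\mathcal B'\|<\infty$ where $\|\mathcal C\|=\sup_{\omega\in\mathfrak S}|\omega(\mathcal C)|$. Then $\mathcal A-\mathcal B\in\mathfrak I$ (i.e. $\mathcal A$ and $\mathcal B$ lie in the same class of $\mathfrak A/\mathfrak I$) if and only if $\mathcal A$ and $\mathcal B$ are informationally equivalent, i.e. $\omega(\mathcal A)=\omega(\mathcal B)$ for all $\omega\in\mathfrak S$.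
   Context: States $\omega\in\mathfrak S$ extend linearly to $\mathfrak A$. A generalized adjoint on $\mathfrak A$ satisfies $(\mathcal A+\mathcal B)'=\mathcal A'+\mathcal B'$, $(\mathcal A')'=\mathcal A$, $(\mathcal A\circ\mathcal B)'=\mathcal B'\circ\mathcal A'$, and $\mathcal A'\circ\mathcal A=0\Rightarrow\mathcal A=0$. $\varphi$ is a state and a real positive form: $\varphi(\mathcal A')=\varphi(\mathcal A)$ and $\varphi(\mathcal A'\circ\mathcal A)\ge0$ for all $\mathcal A\in\mathfrak A$; moreover $\|\mathcal C\circ\mathcal D\|\le\|\mathcal C\|\|\mathcal D\|$. Preparational faithfulness is used in the form: for every $\omega\in\mathfrak S$ there is a transformation $\mathcal T_\omega$ with $\varphi(\mathcal T_\omega)\ne0$ such that $\omega(\mathcal A)=\varphi(\mathcal A\circ\mathcal T_\omega')/\varphi(\mathcal T_\omega)=\langle\mathcal A'|\tilde{\mathcal T}_\omega\rangle_\varphi$ for all $\mathcal A$, where $\tilde{\mathcal T}_\omega=\mathcal T_\omega'/\varphi(\mathcal T_\omega)$. *)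

(* Defs.v *)
From HB Require Import structures.
From mathcomp Require Import all_boot all_order all_algebra.
From mathcomp Require Import all_classical reals ereal.
Set Implicit Arguments. Unset Strict Implicit. Unset Printing Implicit Defensive.
Import Order.TTheory GRing.Theory Num.Theory.
Local Open Scope ring_scope.
Local Open Scope classical_set_scope.

(* Abstract setting: R real numbers, A a real algebra whose multiplication is
   the composition "\circ" of generalized transformations, adj the
   generalized adjoint A |-> A', S the set of states (real functionals on A). *)

Definition generalized_adjoint (R : realType) (A : algType R) (adj : A -> A) :=
  [/\ forall X Y : A, adj (X + Y) = adj X + adj Y,
      forall X : A, adj (adj X) = X,
      forall X Y : A, adj (X * Y) = adj Y * adj X
    & forall X : A, adj X * X = 0 -> X = 0].

Definition linear_states (R : realType) (A : algType R) (S : set (A -> R)) :=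
  forall w, S w -> forall (a : R) (X Y : A), w (a *: X + Y) = a * w X + w Y.

Definition snorm (R : realType) (A : algType R) (S : set (A -> R)) (C : A)
  : \bar R := ereal_sup [set (`|w C|)%:E | w in S].

Definition bounded (R : realType) (A : algType R) (S : set (A -> R))
  (adj : A -> A) (C : A) :=
  (snorm S C < +oo)%E /\ (snorm S (adj C) < +oo)%E.

Definition inner (R : realType) (A : algType R) (phi : A -> R) (adj : A -> A)
  (X Y : A) : R := phi (adj X * Y).

Definition null_ideal (R : realType) (A : algType R) (phi : A -> R)
  (adj : A -> A) : set A := [set X | inner phi adj X X = 0].

Definition real_positive (R : realType) (A : algType R) (phi : A -> R)
  (adj : A -> A) :=
  (forall X, phi (adj X) = phi X) /\ (forall X, 0 <= phi (adj X * X)).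

(* Preparational faithfulness, in the form used:
   w(X) = phi(X o T_w') / phi(T_w). *)
Definition prep_faithful (R : realType) (A : algType R) (S : set (A -> R))
  (phi : A -> R) (adj : A -> A) :=
  forall w, S w -> exists T : A, phi T != 0 /\
    forall X : A, w X = phi (X * adj T) / phi T.

Definition info_equiv (R : realType) (A : algType R) (S : set (A -> R))
  (X Y : A) := forall w, S w -> w X = w Y.

(* Main.v *)
Require Import Defs.
From HB Require Import structures.
From mathcomp Require Import all_boot all_order all_algebra.
From mathcomp Require Import all_classical reals ereal.
Import Order.TTheory GRing.Theory Num.Theory.
Local Open Scope ring_scope.
Local Open Scope classical_set_scope.

Set Implicit Arguments. Unset Strict Implicit.
Section Helpers.
Variables (R : realType) (A : algType R).

Definition islin (f : A -> R) := forall (a : R) (X Y : A), f (a *: X + Y) = a * f X + f Y.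

Lemma lin0 {f} : islin f -> f 0 = 0.
Proof. move=> h; have := h 1 0 0; rewrite scaler0 addr0 mul1r => /eqP.
by rewrite -subr_eq subrr eq_sym => /eqP. Qed.

Lemma linD {f} : islin f -> forall X Y, f (X + Y) = f X + f Y.
Proof. by move=> h X Y; rewrite -[X]scale1r h mul1r scale1r. Qed.

Lemma linN {f} : islin f -> forall X, f (- X) = - f X.
Proof. by move=> h X; have := h (-1) X 0; rewrite addr0 (lin0 h) addr0 scaleN1r mulN1r. Qed.

Lemma linB {f} : islin f -> forall X Y, f (X - Y) = f X - f Y.
Proof. by move=> h X Y; rewrite (linD h) (linN h). Qed.

Lemma linMn {f} : islin f -> forall X n, f (X *+ n) = f X *+ n.
Proof. move=> h X; elim=> [|n IH]; first by rewrite !mulr0n (lin0 h).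
by rewrite !mulrS (linD h) IH. Qed.

Lemma adj0 {adj : A -> A} : (forall X Y, adj (X + Y) = adj X + adj Y) -> adj 0 = 0.
Proof. move=> h; have := h 0 0; rewrite addr0 => /eqP.
by rewrite -subr_eq subrr eq_sym => /eqP. Qed.

Lemma adjN {adj : A -> A} : (forall X Y, adj (X + Y) = adj X + adj Y) ->
  forall X, adj (- X) = - adj X.
Proof. move=> h X; apply/eqP; rewrite -subr_eq0 opprK -h addNr (adj0 h) //. Qed.

Lemma adjMn {adj : A -> A} : (forall X Y, adj (X + Y) = adj X + adj Y) ->
  forall X n, adj (X *+ n) = adj X *+ n.
Proof. move=> h X; elim=> [|n IH]; first by rewrite !mulr0n (adj0 h).
by rewrite !mulrS h IH. Qed.

Lemma quad0 (b c : R) : (forall n, 0 <= b + c *+ n) -> (forall n, 0 <= b - c *+ n) -> c = 0.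
Proof.
move=> h1 h2.
have H : forall n, `|c| *+ n <= b.
  move=> n; rewrite -normrMn ler_norml; apply/andP; split.
    by rewrite -subr_ge0 opprK addrC.
  by rewrite -subr_ge0.
have b0 : 0 <= b by have := H 0%N; rewrite mulr0n.
apply/eqP; apply: contraT => cn0.
have cp : 0 < `|c| by rewrite normr_gt0.
have := archi_boundP (divr_ge0 b0 (ltW cp)).
set n := Num.Def.archi_bound _.
rewrite ltr_pdivrMr // => hb.
have := H n; rewrite -mulr_natr mulrC => hle.
have := lt_le_trans hb hle; by rewrite ltxx.
Qed.

End Helpers.

Lemma cs (R : realType) (A : algType R) (adj : A -> A) (phi : A -> R) :
  generalized_adjoint adj -> islin phi -> real_positive phi adj ->
  forall U V, phi (adj U * U) = 0 -> phi (adj U * V) = 0.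
Proof.
case=> hD hI hM _ hl [hs hp] U V h0.
set a := phi (adj U * V).
have e : phi (adj V * U) = a by rewrite /a -hs hM hI.
suff: a + a = 0 by rewrite -mulr2n => /eqP; rewrite mulrn_eq0 /= => /eqP.
apply: (@quad0 _ (phi (adj V * V)) (a + a)) => n.
- have := hp (V + U *+ n).
  rewrite hD (adjMn hD) mulrDl !mulrDr !mulrnAr !mulrnAl.
  rewrite !(linD hl) !(linMn hl) h0 e.
  by rewrite -/a !mul0rn addr0 mulrnDl addrA.
- have := hp (V - U *+ n).
  rewrite hD (adjN hD) (adjMn hD) mulrDl !mulrDr mulrNN mulrN mulNr !mulrnAr !mulrnAl.
  rewrite !(linD hl) !(linN hl) !(linMn hl) h0 e.
  by rewrite -/a !mul0rn addr0 mulrnDl opprD addrA.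
Qed.

Theorem mainTheorem9 (R : realType) (A : algType R) (adj : A -> A)
  (S : set (A -> R)) (phi : A -> R) :
  generalized_adjoint adj ->
  linear_states S ->
  S phi ->
  real_positive phi adj ->
  (forall C D : A, bounded S adj C -> bounded S adj D ->
     (snorm S (C * D) <= snorm S C * snorm S D)%E) ->
  prep_faithful S phi adj ->
  forall X Y : A, bounded S adj X -> bounded S adj Y ->
  (null_ideal phi adj (X - Y) <-> info_equiv S X Y).
Proof.
move=> hadj hS hphi hpos hsub hpf X Y [bX bX'] [bY bY'].
have hadj' := hadj; case: hadj' => hD hI hM _.
have hl : forall w, S w -> islin w := hS.
have ub : forall w C, S w -> ((`|w C|)%:E <= snorm S C)%E.
  by move=> w C Sw; apply: ereal_sup_ubound; exists w.
have ge0 : forall C, (0 <= snorm S C)%E.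
  by move=> C; apply: le_trans (ub phi C hphi); rewrite lee_fin.
have sB : forall C D, (snorm S (C - D) <= snorm S C + snorm S D)%E.
  move=> C D; apply: ge_ereal_sup => _ [w Sw <-].
  rewrite (linB (hl w Sw)).
  apply: (@le_trans _ _ ((`|w C|)%:E + (`|w D|)%:E)%E).
    by rewrite -EFinD lee_fin ler_normB.
  by apply: leeD; apply: ub.
have s0 : forall C, (forall w, S w -> w C = 0) -> snorm S C = 0.
  move=> C h; apply/eqP; rewrite eq_le ge0 andbT.
  by apply: ge_ereal_sup => _ [w Sw <-]; rewrite h // normr0.
have fromub : forall C, (snorm S C <= 0)%E -> phi C = 0.
  move=> C h; apply/eqP; rewrite -normr_eq0 eq_le normr_ge0 andbT -lee_fin.
  exact: le_trans (ub phi C hphi) h.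
set Z := X - Y.
have eZ : adj Z = adj X - adj Y by rewrite /Z hD (adjN hD).
have bZ : bounded S adj Z.
  split.
    by apply: le_lt_trans (sB X Y) _; apply: lte_add_pinfty.
  by rewrite eZ; apply: le_lt_trans (sB _ _) _; apply: lte_add_pinfty.
have bZ' : bounded S adj (adj Z) by rewrite /bounded hI; case: bZ.
have phil := hl phi hphi.
split.
- rewrite /null_ideal /inner /= => h0 w Sw.
  have sZ' : snorm S (adj Z) = 0.
    apply: s0 => v Sv; have [T [_ ->]] := hpf v Sv.
    by rewrite (cs hadj phil hpos) ?mul0r.
  have := hsub Z (adj Z) bZ bZ'; rewrite sZ' mule0 => /fromub h1.
  have h2 : phi (adj (adj Z) * adj Z) = 0 by rewrite hI.
  have [T [_ hT]] := hpf w Sw.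
  apply/eqP; rewrite -subr_eq0 -(linB (hl w Sw)) -/Z hT.
  by rewrite -{1}(hI Z) (cs hadj phil hpos) ?mul0r.
- move=> h; rewrite /null_ideal /inner /=.
  have sZ : snorm S Z = 0.
    by apply: s0 => w Sw; rewrite /Z (linB (hl w Sw)) h // subrr.
  have := hsub (adj Z) Z bZ' bZ; rewrite sZ mule0.
  exact: fromub.
Qed.
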